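(* Let $M$ and $M'$ be two stable matchings in an instance $I$ of SPA-S. If some student $s_i$ is assigned in $M$ and in $M'$ to different projects that are offered by the same lecturer $l_k$, and $s_i$ prefers $M$ to $M'$, then there exists a student $s_r\in M'(l_k)\setminus M(l_k)$ such that $l_k$ prefers $s_r$ to $s_i$. In particular $M(l_k)\neq M'(l_k)$.
   Context: An instance $I$ of SPA-S consists of a finite set $\mathcal{S}$ of students, a finite set $\mathcal{P}$ of projects and a finite set $\mathcal{L}$ of lecturers. Each student $s_i$ ranks a subset $A_i\subseteq\mathcal{P}$ (its acceptable projects) in strict order. Each project is offered by exactly one lecturer; lecturer $l_k$ offers a nonempty set $P_k\subseteq\mathcal{P}$, the $P_k$ partitioning $\mathcal{P}$. Each lecturer $l_k$ ranks in strict order the students who find at least one project of $P_k$ acceptable. Projects have capacities $c_j\in\mathbb{Z}^+$, lecturers have capacities $d_k\in\mathbb{Z}^+$ with $\max\{c_j:p_j\in P_k\}\le d_k\le\sum\{c_j:p_j\in P_k\}$. A pair $(s_i,p_j)$, $p_j$ offered by $l_k$, is acceptable if $p_j\in A_i$ and $s_i$ is on $l_k$'s list. A matching $M$ is a set of acceptable pairs with each student in at most one pair, $|M(p_j)|\le c_j$, $|M(l_k)|\le d_k$, where $M(s_i)$, $M(p_j)$, $M(l_k)$ denote the project of $s_i$, the students assigned to $p_j$, and the students assigned to projects of $l_k$. Undersubscribed/full means fewer than/exactly capacity many assigned students. An acceptable pair $(s_i,p_j)\notin M$ ($p_j$ offered by $l_k$) blocks $M$ if ($s_i$ is unassigned or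 prefers $p_j$ to $M(s_i)$) and one of: (P1) $p_j$ and $l_k$ undersubscribed; (P2) $p_j$ undersubscribed, $l_k$ full, $s_i\in M(l_k)$; (P3) $p_j$ undersubscribed, $l_k$ full, $l_k$ prefers $s_i$ to the worst student of $M(l_k)$; (P4) $p_j$ full and $l_k$ prefers $s_i$ to the worst student of $M(p_j)$. $M$ is stable if it has no blocking pair. A student $s$ prefers $M$ to $M'$ if $s$ is assigned in both and prefers $M(s)$ to $M'(s)$. *)

(* Defs.v *)
From mathcomp Require Import all_boot.
Set Implicit Arguments. Unset Strict Implicit. Unset Printing Implicit Defensive.

(* An SPA-S instance over finite types of students, projects, lecturers.
   Strict preference lists are encoded by injective ranks (smaller rank =
   more preferred) on the acceptable elements. *)
Record SPAS (Student Project Lecturer : finType) := {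
  offer : Project -> Lecturer;
  acc : Student -> {set Project};
  srank : Student -> Project -> nat;
  lrank : Lecturer -> Student -> nat;
  pcap : Project -> nat;
  lcap : Lecturer -> nat;
  srank_inj : forall s p q, p \in acc s -> q \in acc s ->
                srank s p = srank s q -> p = q;
  lrank_inj : forall l s t,
    [exists p, (offer p == l) && (p \in acc s)] ->
    [exists p, (offer p == l) && (p \in acc t)] ->
    lrank l s = lrank l t -> s = t;
  offers_nonempty : forall l, [exists p, offer p == l];
  pcap_pos : forall p, 0 < pcap p;
  lcap_ge : forall l p, offer p = l -> pcap p <= lcap l;
  lcap_le : forall l, lcap l <= \sum_(p | offer p == l) pcap p
}.

Section Defs.
Variables (Student Project Lecturer : finType).
Variable I : SPAS Student Project Lecturer.

Definition projs_of (l : Lecturer) : {set Project} :=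
  [set p | offer I p == l].

(* students on l's list: those finding some project of l acceptable *)
Definition llist (l : Lecturer) : {set Student} :=
  [set s | [exists p, (offer I p == l) && (p \in acc I s)]].

Definition acceptable (s : Student) (p : Project) : Prop :=
  p \in acc I s /\ s \in llist (offer I p).

Definition sprefers (s : Student) (p q : Project) : Prop :=
  srank I s p < srank I s q.

Definition lprefers (l : Lecturer) (s t : Student) : Prop :=
  lrank I l s < lrank I l t.

Definition assignment := Student -> option Project.

Definition Mp (M : assignment) (p : Project) : {set Student} :=
  [set s | M s == Some p].

Definition Ml (M : assignment) (l : Lecturer) : {set Student} :=
  [set s | [exists p, (M s == Some p) && (offer I p == l)]].

Definition is_matching (M : assignment) : Prop :=
  (forall s p, M s = Some p -> acceptable s p) /\
  (forall p, #|Mp M p| <= pcap I p) /\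
  (forall l, #|Ml M l| <= lcap I l).

Definition p_under (M : assignment) p := #|Mp M p| < pcap I p.
Definition p_full (M : assignment) p := #|Mp M p| = pcap I p.
Definition l_under (M : assignment) l := #|Ml M l| < lcap I l.
Definition l_full (M : assignment) l := #|Ml M l| = lcap I l.

Definition prefers_to_worst (l : Lecturer) (s : Student) (S : {set Student}) : Prop :=
  exists w, [/\ w \in S, (forall t, t \in S -> lrank I l t <= lrank I l w)
              & lprefers l s w].

Definition blocks (M : assignment) (s : Student) (p : Project) : Prop :=
  let l := offer I p in
  [/\ acceptable s p, M s <> Some p,
      (M s = None \/ exists q, M s = Some q /\ sprefers s p q) &
      [\/ (p_under M p /\ l_under M l),
          [/\ p_under M p, l_full M l & s \in Ml M l],
          [/\ p_under M p, l_full M l & prefers_to_worst l s (Ml M l)] |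
          (p_full M p /\ prefers_to_worst l s (Mp M p))]].

Definition stable (M : assignment) : Prop :=
  is_matching M /\ forall s p, ~ blocks M s p.

End Defs.

(* Main.v *)
Require Import Defs.
From mathcomp Require Import all_boot.
From mathcomp Require Import zify.
Set Implicit Arguments. Unset Strict Implicit. Unset Printing Implicit Defensive.

Section S.
Variables (Student Project Lecturer : finType) (I : SPAS Student Project Lecturer).

Lemma under_or_full (M : assignment Student Project) l :
  is_matching I M -> l_under I M l \/ l_full I M l.
Proof.
case=> _ [_ H]; rewrite /l_under /l_full; move: (H l).
by rewrite leq_eqVlt => /orP[/eqP->|->]; [right|left].
Qed.

Lemma p_under_or_full (M : assignment Student Project) p :
  is_matching I M -> p_under I M p \/ p_full I M p.
Proof.
case=> _ [H _]; rewrite /p_under /p_full; move: (H p).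
by rewrite leq_eqVlt => /orP[/eqP->|->]; [right|left].
Qed.

Lemma inMl (M : assignment Student Project) s q :
  M s = Some q -> s \in Ml I M (offer I q).
Proof. move=> H; rewrite inE; apply/existsP; exists q; by rewrite H !eqxx. Qed.

Lemma block_full (M : assignment Student Project) t p q :
  stable I M -> acceptable I t p -> M t = Some q -> q <> p ->
  offer I q = offer I p -> sprefers I t p q ->
  p_full I M p /\ ~ prefers_to_worst I (offer I p) t (Mp M p).
Proof.
move=> [HM Hst] Hacc Ht Hqp Hl Hpref.
have Hb := Hst t p.
have Hne : M t <> Some p by rewrite Ht => -[].
have Hml : t \in Ml I M (offer I p) by rewrite -Hl; exact: inMl.
case: (p_under_or_full p HM) => Hp.
  exfalso; apply: Hb; split => //; first by right; exists q.
  case: (under_or_full (offer I p) HM) => Hl'.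
    by apply: Or41.
  by apply: Or42.
split=> // Hw; apply: Hb; split => //; first by right; exists q.
by apply: Or44.
Qed.

Lemma not_ptw l t (S : {set Student}) x : x \in S ->
  ~ prefers_to_worst I l t S -> lrank I l x <= lrank I l t.
Proof.
move=> Hx Hn.
case: (@arg_maxnP _ x (mem S) (lrank I l) Hx) => w Hw Hmax.
rewrite leqNgt; apply/negP => Hlt; apply: Hn; exists w; split => //.
exact: leq_trans Hlt (Hmax _ Hx).
Qed.

Lemma main (M M' : assignment Student Project) (HM : stable I M) (HM' : stable I M') n :
  forall s p p',
  lrank I (offer I p) s < n ->
  M s = Some p -> M' s = Some p' -> p <> p' -> offer I p = offer I p' ->
  sprefers I s p p' ->
  exists sr, [/\ sr \in Ml I M' (offer I p), sr \notin Ml I M (offer I p)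
                & lprefers I (offer I p) sr s].
Proof.
elim: n => // n IH s p p' Hn Hs Hs' Hpp' Hl Hpref.
have HaccS := proj1 (proj1 HM) _ _ Hs.
have [Hfull Hnw] := block_full HM' HaccS Hs' (nesym Hpp') (esym Hl) Hpref.
have HsM' : s \notin Mp M' p by rewrite inE Hs'; apply/eqP => -[/esym].
have HsM : s \in Mp M p by rewrite inE Hs.
case: (boolP (Mp M' p \subset Mp M p :\ s)) => Hsub.
  exfalso.
  have H1 := subset_leq_card Hsub.
  have H2 := cardsD1 s (Mp M p).
  have H3 := (proj1 (proj2 (proj1 HM))) p.
  rewrite HsM in H2; rewrite /p_full in Hfull; lia.
case/subsetPn: Hsub => t1 Ht1' Ht1.
have Hts : t1 != s by apply/eqP => E; move: Ht1'; rewrite E (negbTE HsM').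
rewrite in_setD1 Hts /= in Ht1.
have Ht1M' : M' t1 = Some p by move: Ht1'; rewrite inE => /eqP.
have HaccT := proj1 (proj1 HM') _ _ Ht1M'.
have Hle := not_ptw Ht1' Hnw.
have Hlt : lrank I (offer I p) t1 < lrank I (offer I p) s.
  rewrite ltn_neqAle Hle andbT; apply/eqP => E.
  move/eqP: Hts; apply.
  apply: (lrank_inj _ _ E).
    by move: HaccT.2; rewrite inE.
  by move: HaccS.2; rewrite inE.
case: (boolP (t1 \in Ml I M (offer I p))) => Hin; last first.
  exists t1; split => //; exact: inMl Ht1M'.
move: Hin; rewrite inE => /existsP[q1 /andP[/eqP Hq1 /eqP Hoq1]].
have Hq1p : q1 <> p by move=> E; move: Ht1; rewrite inE Hq1 E eqxx.
have HaccT1 := proj1 (proj1 HM) _ _ Hq1.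
case: (ltngtP (srank I t1 q1) (srank I t1 p)) => Hc.
- have [sr [A B C]] := IH t1 q1 p ltac:(rewrite Hoq1; lia) Hq1 Ht1M' Hq1p Hoq1 Hc.
  exists sr; rewrite -Hoq1; split => //.
  rewrite /lprefers in C *; rewrite Hoq1 in C *; lia.
- have [_ Hnw2] := block_full HM HaccT Hq1 Hq1p Hoq1 Hc.
  have := not_ptw HsM Hnw2; lia.
- exfalso; apply: Hq1p; exact: (srank_inj HaccT1.1 HaccT.1 Hc).
Qed.

End S.

Theorem lemma1 (Student Project Lecturer : finType)
  (I : SPAS Student Project Lecturer) (M M' : assignment Student Project)
  (s : Student) (p p' : Project) :
  stable I M -> stable I M' ->
  M s = Some p -> M' s = Some p' -> p <> p' ->
  offer I p = offer I p' ->
  sprefers I s p p' ->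
  (exists sr, [/\ sr \in Ml I M' (offer I p), sr \notin Ml I M (offer I p)
                & lprefers I (offer I p) sr s])
  /\ Ml I M (offer I p) <> Ml I M' (offer I p).
Proof.
move=> HM HM' Hs Hs' Hpp' Hl Hpref.
have [sr [A B C]] := main HM HM' (ltnSn _) Hs Hs' Hpp' Hl Hpref.
split; first by exists sr.
by move=> E; rewrite E A in B.
Qed.
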